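(* Let $\mathcal{R}$ be a left-connected rewriting system over a signature $\Sigma$, let $L_1$ and $L_2$ be the left-hand sides of two rules of $\mathcal{R}$, and let $(g_1,g_2\colon G\to L_1+L_2)$ be a gluing scheme that yields a pre-critical pair. If a node $A$ of $L_1$ and a node $B$ of $L_2$ are glued, then one of the following holds: (a) there are glued hyperedges $e_1$ of $L_1$ and $e_2$ of $L_2$ and an index $k$ such that $A$ is the $k$-th source of $e_1$ and $B$ is the $k$-th source of $e_2$; (b) there are glued hyperedges $e_1$ of $L_1$ and $e_2$ of $L_2$ and an index $i$ such that $A$ is the $i$-th target of $e_1$ and $B$ is the $i$-th target of $e_2$; (c) $A\in out(L_1)$ and $B\in in(L_2)$; (d) $A\in in(L_1)$ and $B\in out(L_2)$.
   Context: A signature $\Sigma$ is a set of triples $(x,n,m)$ (label, arity, coarity). A $\Sigma$-hypergraph $G=(V,E,s,t,l)$ has finite sets $V$ (nodes), $E$ (hyperedges), maps $s,t\colon E\to V^*$ (lists of sources/targets) and a labelling $l\colon E\to\Sigma$ sending a hyperedge with $n$ sources and $m$ targets to some $(x,n,m)$. Morphisms $f=(f_V,f_E)$ preserve sources, targets and labels; they form the category $\mathbf{Hyp}_\Sigma$, where colimits are computed componentwise and monos/epis are injective/surjective on nodes and hyperedges. Composition is written $f;g$; $\iota_1,\iota_2$ are coprojections. A hypergraph is discrete if it has no hyperedges. A path is a list of hyperedges $[e_1,\dots,e_n]$ with some target of $e_k$ equal to a source of $e_{k+1}$ for each $k$; it goes from $v$ to $v'$ if $v$ is a source of $e_1$ and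 $v'$ a target of $e_n$; a cycle is a path with some source of $e_1$ a target of $e_n$. In-degree (out-degree) of a node $v$: number of pairs $(e,i)$ with $v$ the $i$-th target (source) of $e$; $in(H)$, $out(H)$: nodes of in-degree $0$, out-degree $0$. $H$ is ma (monogamous acyclic) if it has no cycle and all in- and out-degrees are $\le 1$. A cospan $I\to H\leftarrow O$ with $I,O$ discrete is an ma-cospan if $H$ is ma and the legs are mono with images $in(H)$ and $out(H)$. $H$ is strongly connected if for all $x\in in(H)$, $y\in out(H)$ there is a path from $x$ to $y$. A left-connected rule is a span $L\xleftarrow{[i_L,o_L]}I+O\xrightarrow{[i_R,o_R]}R$ with $I,O$ discrete, $I\to L\leftarrow O$ and $I\to R\leftarrow O$ ma-cospans, $[i_L,o_L]$ mono and $L$ strongly connected; a left-connected rewriting system is a finite set of such rules. A convex match is a mono $m\colon L\to G$ such that every path in $G$ between two nodes of $m(L)$ has all its hyperedges in $m(L)$. A derivation between ma-cospans $n\to G\leftarrow m$ and $n\to H\leftarrow m$ via a rule $L\leftarrow K\to R$ is given by a convex match $L\to G$ and a double-pushout diagram $L\leftarrow K\to R$ over $G\leftarrow C\to H$ with both squares pushouts (the left one a boundary complement, which is automatic for left-connected systems) commuting with the interface $n+m$; for left-connected systems mono matches are automatically convex and pushout complements exist uniquely. A pre-critical pair consists of two derivations, via rules with left-hand sides $L_1,L_2$, from a common ma-cospan $n\to S\leftarrow m$ with matches $m_1,m_2$ such that $[m_1,m_2]\colon L_1+L_2\to S$ is epi. A gluing scheme for $L_1,L_2$ is a $\Sigma$-hypergraph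 $G$ with morphisms $g_1,g_2\colon G\to L_1+L_2$; its gluing is the coequaliser $\epsilon\colon L_1+L_2\to S=\mathtt{coeq}(g_1,g_2)$. Two nodes (or hyperedges) $x,x'$ of $L_1+L_2$ are glued if some node (hyperedge) $y$ of $G$ has $g_1(y)=x$, $g_2(y)=x'$. The gluing scheme yields a pre-critical pair if $\iota_1;\epsilon$ and $\iota_2;\epsilon$ are mono and $in(S)\xrightarrow{\subseteq}S\xleftarrow{\subseteq}out(S)$ is an ma-cospan; the pre-critical pair is then formed by the (unique) derivations from this ma-cospan with matches $\iota_1;\epsilon$ and $\iota_2;\epsilon$. *)

(* Defs.v *)
From HB Require Import structures.
From mathcomp Require Import all_boot.
Set Implicit Arguments. Unset Strict Implicit. Unset Printing Implicit Defensive.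

Record signature := Signature {
  sym :> Type;
  ar : sym -> nat;
  coar : sym -> nat }.

Section Hyp.
Variable Sig : signature.

Record hyp := Hyp {
  hV : finType;
  hE : finType;
  hsrc : hE -> seq hV;
  htgt : hE -> seq hV;
  hlab : hE -> sym Sig;
  hsrc_size : forall e, size (hsrc e) = ar (hlab e);
  htgt_size : forall e, size (htgt e) = coar (hlab e) }.

Record hmor (G H : hyp) := HMor {
  mV : hV G -> hV H;
  mE : hE G -> hE H;
  mor_src : forall e, hsrc (mE e) = map mV (hsrc e);
  mor_tgt : forall e, htgt (mE e) = map mV (htgt e);
  mor_lab : forall e, hlab (mE e) = hlab e }.

Definition mor_eq G H (f g : hmor G H) :=
  mV f =1 mV g /\ mE f =1 mE g.

Definition comp G H K (f : hmor G H) (g : hmor H K) : hmor G K.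
Proof.
refine (@HMor G K (mV g \o mV f) (mE g \o mE f) _ _ _) => e /=.
- by rewrite mor_src mor_src map_comp.
- by rewrite mor_tgt mor_tgt map_comp.
- by rewrite !mor_lab.
Defined.

Definition mono G H (f : hmor G H) := injective (mV f) /\ injective (mE f).

Definition discrete (G : hyp) := #|hE G| = 0.

Definition coprod (G H : hyp) : hyp.
Proof.
refine (@Hyp (hV G + hV H)%type (hE G + hE H)%type
  (fun e => match e with inl e => map inl (hsrc e) | inr e => map inr (hsrc e) end)
  (fun e => match e with inl e => map inl (htgt e) | inr e => map inr (htgt e) end)
  (fun e => match e with inl e => hlab e | inr e => hlab e end) _ _);
  by case=> e; rewrite size_map ?hsrc_size ?htgt_size.
Defined.

Definition inj1 G H : hmor G (coprod G H).
Proof. by refine (@HMor G (coprod G H) inl inl _ _ _). Defined.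
Definition inj2 G H : hmor H (coprod G H).
Proof. by refine (@HMor H (coprod G H) inr inr _ _ _). Defined.

Definition copair G H K (f : hmor G K) (g : hmor H K) : hmor (coprod G H) K.
Proof.
refine (@HMor (coprod G H) K
  (fun v => match v with inl v => mV f v | inr v => mV g v end)
  (fun e => match e with inl e => mE f e | inr e => mE g e end) _ _ _);
  case=> e /=; rewrite ?mor_src ?mor_tgt ?mor_lab -?map_comp //.
Defined.

Definition is_coeq A B C (f1 f2 : hmor A B) (q : hmor B C) :=
  mor_eq (comp f1 q) (comp f2 q) /\
  forall D (h : hmor B D), mor_eq (comp f1 h) (comp f2 h) ->
    exists u : hmor C D, mor_eq (comp q u) h /\
      forall u' : hmor C D, mor_eq (comp q u') h -> mor_eq u u'.

Definition indeg (G : hyp) (v : hV G) := \sum_(e : hE G) count_mem v (htgt e).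
Definition outdeg (G : hyp) (v : hV G) := \sum_(e : hE G) count_mem v (hsrc e).
Definition inset (G : hyp) : pred (hV G) := fun v => indeg v == 0.
Definition outset (G : hyp) : pred (hV G) := fun v => outdeg v == 0.
Arguments inset : clear implicits.
Arguments outset : clear implicits.

Definition linked (G : hyp) (e f : hE G) := has (fun v => v \in hsrc f) (htgt e).

Definition is_path_from (G : hyp) (v v' : hV G) (p : seq (hE G)) :=
  match p with
  | [::] => False
  | e :: p' => [/\ path (@linked G) e p', v \in hsrc e & v' \in htgt (last e p')]
  end.

Definition is_cycle (G : hyp) (p : seq (hE G)) :=
  match p with
  | [::] => False
  | e :: p' => path (@linked G) e p' /\ linked (last e p') e
  end.

Definition is_ma (G : hyp) :=
  [/\ forall p : seq (hE G), ~ is_cycle p,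
      forall v : hV G, indeg v <= 1 & forall v : hV G, outdeg v <= 1].

Definition ma_cospan (I H O : hyp) (i : hmor I H) (o : hmor O H) :=
  [/\ discrete I, discrete O, is_ma H, mono i & mono o] /\
  (forall v, (v \in inset H) = (v \in codom (mV i))) /\
  (forall v, (v \in outset H) = (v \in codom (mV o))).

Definition strongly_connected (G : hyp) :=
  forall x y : hV G, x \in inset G -> y \in outset G ->
    exists p, is_path_from x y p.

Record lc_rule := LCRule {
  rL : hyp; rR : hyp; rI : hyp; rO : hyp;
  riL : hmor rI rL; roL : hmor rO rL;
  riR : hmor rI rR; roR : hmor rO rR;
  rI_discrete : discrete rI;
  rO_discrete : discrete rO;
  rL_macospan : ma_cospan riL roL;
  rR_macospan : ma_cospan riR roR;
  rL_mono : mono (copair riL roL);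
  rL_sc : strongly_connected rL }.

Definition discr_on (G : hyp) (P : pred (hV G)) : hyp.
Proof.
refine (@Hyp {v : hV G | P v} 'I_0 (fun e => [::]) (fun e => [::])
               (fun e => match e with Ordinal _ h => False_rect _ (notF h) end) _ _);
by case.
Defined.

Definition discr_incl (G : hyp) (P : pred (hV G)) : hmor (discr_on P) G.
Proof.
refine (@HMor (discr_on P) G val (fun e => match e with Ordinal _ h => False_rect _ (notF h) end) _ _ _);
by case.
Defined.

Definition yields_precritical (L1 L2 G S : hyp)
  (g1 g2 : hmor G (coprod L1 L2)) (eps : hmor (coprod L1 L2) S) :=
  [/\ is_coeq g1 g2 eps,
      mono (comp (@inj1 L1 L2) eps),
      mono (comp (@inj2 L1 L2) eps) &
      ma_cospan (discr_incl (inset S)) (discr_incl (outset S))].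

Definition glued_dir_V G L (g1 g2 : hmor G L) (x x' : hV L) :=
  exists y, mV g1 y = x /\ mV g2 y = x'.
Definition glued_dir_E G L (g1 g2 : hmor G L) (x x' : hE L) :=
  exists y, mE g1 y = x /\ mE g2 y = x'.
Definition glued_V G L (g1 g2 : hmor G L) (x x' : hV L) :=
  glued_dir_V g1 g2 x x' \/ glued_dir_V g1 g2 x' x.
Definition glued_E G L (g1 g2 : hmor G L) (x x' : hE L) :=
  glued_dir_E g1 g2 x x' \/ glued_dir_E g1 g2 x' x.

End Hyp.
Arguments inset {Sig} G.
Arguments outset {Sig} G.

(* Main.v *)
Require Import Defs.
From HB Require Import structures.
From mathcomp Require Import all_boot.
Set Implicit Arguments. Unset Strict Implicit. Unset Printing Implicit Defensive.

Section Coeq.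
Variables (Sig : signature) (G L : hyp Sig) (g1 g2 : hmor G L).

Definition rV : rel (hV L) := fun x x' =>
  [exists y, (mV g1 y == x) && (mV g2 y == x')] ||
  [exists y, (mV g2 y == x) && (mV g1 y == x')].
Definition rE : rel (hE L) := fun x x' =>
  [exists y, (mE g1 y == x) && (mE g2 y == x')] ||
  [exists y, (mE g2 y == x) && (mE g1 y == x')].

Lemma rV_sym : symmetric rV.
Proof. by move=> x y; rewrite /rV orbC; congr (_ || _); apply: eq_existsb => z; exact: andbC. Qed.
Lemma rE_sym : symmetric rE.
Proof. by move=> x y; rewrite /rE orbC; congr (_ || _); apply: eq_existsb => z; exact: andbC. Qed.

Definition rootV := root rV.
Definition rootE := root rE.

Lemma rootV_eq x y : connect rV x y -> rootV x = rootV y.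
Proof. by move=> h; apply/(rootP (sym_connect_sym rV_sym)). Qed.
Lemma rootE_eq x y : connect rE x y -> rootE x = rootE y.
Proof. by move=> h; apply/(rootP (sym_connect_sym rE_sym)). Qed.

Lemma g12V v : rootV (mV g1 v) = rootV (mV g2 v).
Proof. apply: rootV_eq; apply: connect1; apply/orP; left; apply/existsP; exists v; by rewrite !eqxx. Qed.
Lemma g12E v : rootE (mE g1 v) = rootE (mE g2 v).
Proof. apply: rootE_eq; apply: connect1; apply/orP; left; apply/existsP; exists v; by rewrite !eqxx. Qed.

Definition compatP (e e' : hE L) :=
  [/\ map rootV (hsrc e) = map rootV (hsrc e'),
      map rootV (htgt e) = map rootV (htgt e') & hlab e = hlab e'].

Lemma compat_step e e' : rE e e' -> compatP e e'.
Proof.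
case/orP => /existsP [y /andP [/eqP <- /eqP <-]];
 rewrite /compatP !mor_src !mor_tgt !mor_lab -!map_comp; split => //;
 apply: eq_map => v /=; by rewrite g12V.
Qed.

Lemma compat e e' : connect rE e e' -> compatP e e'.
Proof.
case/connectP => p pth ->; elim: p e pth => [|y p IH] e /=; first by split.
case/andP => h pth; have [a b c] := compat_step h; have [a' b' c'] := IH _ pth.
by split; [rewrite a | rewrite b | rewrite c].
Qed.

Definition Dq : hyp Sig.
Proof.
refine (@Hyp Sig (hV L) (hE L) (fun e => map rootV (hsrc e)) (fun e => map rootV (htgt e))
  (@hlab _ L) _ _); by move=> e; rewrite size_map ?hsrc_size ?htgt_size.
Defined.

Definition hq : hmor L Dq.
Proof.
refine (@HMor _ L Dq rootV rootE _ _ _) => e /=;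
 have [a b c] := compat (connect_root rE e); by [].
Defined.

Lemma coeq_sound C (q : hmor L C) : is_coeq g1 g2 q ->
  (forall x x', mV q x = mV q x' -> connect rV x x') /\
  (forall x x', mE q x = mE q x' -> connect rE x x').
Proof.
case=> _ U.
have [u [[hu1 hu2] _]] := U Dq hq (conj (@g12V) (@g12E)).
split => x x' h.
- have := hu1 x; have := hu1 x' => /=; rewrite h => -> e.
  by apply/(rootP (sym_connect_sym rV_sym)).
- have := hu2 x; have := hu2 x' => /=; rewrite h => -> e.
  by apply/(rootP (sym_connect_sym rE_sym)).
Qed.

End Coeq.

Lemma onth_count (T : eqType) (v : T) s k j :
  onth s k = Some v -> onth s j = Some v -> k != j -> 1 < count_mem v s.
Proof.
have cnt : forall s' i, onth s' i = Some v -> 0 < count_mem v s'.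
  move=> s' i h; have : v \in s' by apply/onthP; exists i.
  by rewrite lt0n; apply: contraL => /eqP/count_memPn.
elim: s k j => [|x s IH] [|k] [|j] //=.
- by case=> -> h _; rewrite eqxx add1n ltnS (cnt _ _ h).
- by move=> h [->] _; rewrite eqxx add1n ltnS (cnt _ _ h).
- move=> h1 h2 nkj; have := IH _ _ h1 h2 nkj; case: (x == v) => /=.
  by rewrite add1n => /ltnW. by rewrite add0n.
Qed.

Lemma sum_pos (T : finType) (V : eqType) (f : T -> seq V) v e :
  v \in f e -> 0 < \sum_(x : T) count_mem v (f x).
Proof.
move=> h; rewrite (bigD1 e) //= ltn_addr //.
by rewrite lt0n; apply/negP => /eqP/count_memPn; rewrite h.
Qed.

Lemma two_pos (T : finType) (V : eqType) (f : T -> seq V) v e e' k j :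
  onth (f e) k = Some v -> onth (f e') j = Some v ->
  \sum_(x : T) count_mem v (f x) <= 1 -> e = e' /\ k = j.
Proof.
move=> h1 h2 hs.
have p1 : 0 < count_mem v (f e).
  by rewrite lt0n; apply/negP => /eqP/count_memPn; case/negP; apply/onthP; exists k.
have p2 : 0 < count_mem v (f e').
  by rewrite lt0n; apply/negP => /eqP/count_memPn; case/negP; apply/onthP; exists j.
case: (eqVneq e e') => [ee|ne].
- subst e'; split => //; case: (eqVneq k j) => // nkj; exfalso.
  have := onth_count h1 h2 nkj; rewrite (bigD1 e) //= in hs.
  move: hs; set z := \sum_(i | _) _; move=> hs hc.
  by have := leq_trans (leq_addr z _) hs; rewrite leqNgt hc.
- exfalso; move: hs; rewrite (bigD1 e) //= (bigD1 e') //=; last by rewrite eq_sym.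
  set z := \sum_(i | _) _; move=> hs.
  have : 2 <= count_mem v (f e) + (count_mem v (f e') + z).
    by rewrite -(addn1 1) leq_add // ltn_addr.
  by rewrite leqNgt (leq_ltn_trans hs).
Qed.

Lemma sum_nz (T : finType) (V : eqType) (f : T -> seq V) v :
  \sum_(x : T) count_mem v (f x) != 0 -> exists e k, onth (f e) k = Some v.
Proof.
case: (boolP [exists e, v \in f e]) => [/existsP [e /onthP [k hk]] _|/existsPn h].
  by exists e, k.
by rewrite big1 // => e _; apply/count_memPn; exact: h.
Qed.

Lemma chain (T1 T2 C : Type) (r : rel (T1 + T2)) (f : T1 + T2 -> C) :
  (forall a b, r a b -> f a = f b) ->
  forall p x, path r x p -> forall a, x = inl a -> forall b, last x p = inr b ->
  exists a' b', [/\ r (inl a') (inr b'), f (inl a') = f x & f (inr b') = f x].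
Proof.
move=> rf; elim=> [|y p IH] x /=; first by move=> _ a -> b.
case/andP => rxy pth a xa b lb.
case: y rxy pth lb => [a'|b'] rxy pth lb.
- have [a2 [b2 [h1 h2 h3]]] := IH _ pth a' erefl b lb.
  by exists a2, b2; split => //; [rewrite h2 | rewrite h3]; exact/esym/rf.
- by exists a, b'; subst x; split => //; exact/esym/rf.
Qed.

Theorem mainTheorem2 (Sig : signature) (n : nat) (Rsys : 'I_n -> lc_rule Sig)
  (r1 r2 : 'I_n) (G S : hyp Sig)
  (g1 g2 : hmor G (coprod (rL (Rsys r1)) (rL (Rsys r2))))
  (eps : hmor (coprod (rL (Rsys r1)) (rL (Rsys r2))) S) :
  yields_precritical g1 g2 eps ->
  forall (A : hV (rL (Rsys r1))) (B : hV (rL (Rsys r2))),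
    glued_V g1 g2 (inl A) (inr B) ->
    [\/ exists (e1 : hE (rL (Rsys r1))) (e2 : hE (rL (Rsys r2))) (k : nat),
          [/\ glued_E g1 g2 (inl e1) (inr e2),
              onth (hsrc e1) k = Some A & onth (hsrc e2) k = Some B],
        exists (e1 : hE (rL (Rsys r1))) (e2 : hE (rL (Rsys r2))) (i : nat),
          [/\ glued_E g1 g2 (inl e1) (inr e2),
              onth (htgt e1) i = Some A & onth (htgt e2) i = Some B],
        A \in outset (rL (Rsys r1)) /\ B \in inset (rL (Rsys r2)) |
        A \in inset (rL (Rsys r1)) /\ B \in outset (rL (Rsys r2))].
Proof.
case=> Hco m1 m2 [[_ _ [_ Hin Hout] _ _] _] A B Hg.
have vAB : mV eps (inl A) = mV eps (inr B).
  case: Hco => [[c1 _] _].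
  by case: Hg => [[y [h1 h2]]|[y [h1 h2]]]; have := c1 y => /=; rewrite h1 h2.
have Eglue : forall e1 e2, mE eps (inl e1) = mE eps (inr e2) ->
    glued_E g1 g2 (inl e1) (inr e2).
  move=> e1 e2 he.
  have /connectP [p pth lst] := (coeq_sound Hco).2 _ _ he.
  have rf : forall a b, rE g1 g2 a b -> mE eps a = mE eps b.
    case: Hco => [[_ c2] _] a b.
    by case/orP => /existsP [y /andP [/eqP <- /eqP <-]]; have := c2 y.
  have [a' [b' [r h2 h3]]] := chain rf pth erefl (esym lst).
  have ea : a' = e1 by apply: (m1.2); rewrite /= h2.
  have eb : b' = e2 by apply: (m2.2); rewrite /= h3 he.
  subst a' b'.
  case/orP: r => /existsP [y /andP [/eqP h1 /eqP h4]].
    by left; exists y.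
  by right; exists y.
have noiso : forall i (v : hV (rL (Rsys i))), v \in inset (rL (Rsys i)) ->
    v \in outset (rL (Rsys i)) -> False.
  move=> i v vi vo; have [[|e p] hp] := rL_sc vi vo => //.
  case: hp => _ hs _; move: vo; rewrite /outset /= /outdeg.
  have := sum_pos (f := fun e => hsrc e) hs; rewrite lt0n.
  by move=> /negPf h; rewrite /in_mem /= h.
have HO : (exists (e1 : hE (rL (Rsys r1))) (e2 : hE (rL (Rsys r2))) (k : nat),
          [/\ glued_E g1 g2 (inl e1) (inr e2),
              onth (hsrc e1) k = Some A & onth (hsrc e2) k = Some B])
     \/ (A \in outset (rL (Rsys r1)) \/ B \in outset (rL (Rsys r2))).
  case: (boolP (A \in outset _)) => [Ao|]; first by right; left.
  case: (boolP (B \in outset _)) => [Bo|]; first by right; right.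
  move=> /(sum_nz (f := fun e => hsrc e)) [e2 [j h2]].
  move=> /(sum_nz (f := fun e => hsrc e)) [e1 [k h1]].
  left.
  have s1 : onth (hsrc (mE eps (inl e1))) k = Some (mV eps (inl A)).
    by rewrite mor_src /= !onth_map h1.
  have s2 : onth (hsrc (mE eps (inr e2))) j = Some (mV eps (inl A)).
    by rewrite mor_src /= !onth_map h2 vAB.
  have [ee kj] := two_pos s1 s2 (Hout _).
  subst j; exists e1, e2, k; split => //; exact: Eglue.
have HI : (exists (e1 : hE (rL (Rsys r1))) (e2 : hE (rL (Rsys r2))) (k : nat),
          [/\ glued_E g1 g2 (inl e1) (inr e2),
              onth (htgt e1) k = Some A & onth (htgt e2) k = Some B])
     \/ (A \in inset (rL (Rsys r1)) \/ B \in inset (rL (Rsys r2))).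
  case: (boolP (A \in inset _)) => [Ao|]; first by right; left.
  case: (boolP (B \in inset _)) => [Bo|]; first by right; right.
  move=> /(sum_nz (f := fun e => htgt e)) [e2 [j h2]].
  move=> /(sum_nz (f := fun e => htgt e)) [e1 [k h1]].
  left.
  have s1 : onth (htgt (mE eps (inl e1))) k = Some (mV eps (inl A)).
    by rewrite mor_tgt /= !onth_map h1.
  have s2 : onth (htgt (mE eps (inr e2))) j = Some (mV eps (inl A)).
    by rewrite mor_tgt /= !onth_map h2 vAB.
  have [ee kj] := two_pos s1 s2 (Hin _).
  subst j; exists e1, e2, k; split => //; exact: Eglue.
case: HO => [?|[Ao|Bo]]; first by constructor 1.
- case: HI => [?|[Ai|Bi]]; first by constructor 2.
  + by exfalso; exact: noiso Ai Ao.
  + by constructor 3.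
- case: HI => [?|[Ai|Bi]]; first by constructor 2.
  + by constructor 4.
  + by exfalso; exact: noiso Bi Bo.
Qed.
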